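(* As $d \to \infty$, \[ m_{\mathcal S}(d) \geq (1+o(1))\frac{\log d}{\log \log d}, \] where $\mathcal S$ is the class of star forests. In other words, there is a function $\varepsilon(d) \to 0$ as $d\to\infty$ such that for every $d$ there exists a family of at least $(1+\varepsilon(d))\frac{\log d}{\log\log d}$ star forests (minus one) — more precisely, a family of $m_{\mathcal S}(d)-1$ star forests — showing that $m_{\mathcal S}(d) \geq (1+\varepsilon(d))\frac{\log d}{\log \log d}$.
   Context: All graphs are finite. Given a family $\mathcal G = \{G_1,\dots,G_k\}$ of graphs all spanning a common vertex set $V$, a cooperative coloring of $\mathcal G$ is a family of sets $R_1,\dots,R_k \subseteq V$ such that each $R_i$ is an independent set of $G_i$ and $V = \bigcup_{i=1}^k R_i$. For a graph class $\mathcal H$, $m_{\mathcal H}(d)$ denotes the minimum value $m$ such that every family $\mathcal G$ of at least $m$ graphs from $\mathcal H$, each of maximum degree at most $d$, spanning a common vertex set, has a cooperative coloring. A star forest is a graph each of whose connected components is a star (a tree with at most one vertex of degree greater than $1$). $\mathcal S$ denotes the class of star forests. Logarithms are natural, and asymptotic notation is as $d \to \infty$. *)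

(* Defs.v *)
From mathcomp Require Import all_boot.
From Stdlib Require Import Reals.
Set Implicit Arguments.
Unset Strict Implicit.
Unset Printing Implicit Defensive.

Definition simple_graph (V : finType) (G : rel V) : Prop :=
  (forall x, ~~ G x x) /\ (forall x y, G x y = G y x).

Definition max_deg_le (V : finType) (G : rel V) (d : nat) : Prop :=
  forall x : V, #|[set y | G x y]| <= d.

(* Star forest: every connected component is a star, i.e. in the component of
   any vertex x there is a center c such that every edge of that component is
   incident to c (a single vertex is a star with no edges). *)
Definition star_forest (V : finType) (G : rel V) : Prop :=
  forall x : V, exists c : V,
    forall u v, connect G x u -> G u v -> (u == c) || (v == c).

Definition independent (V : finType) (G : rel V) (R : {set V}) : Prop :=
  forall x y, x \in R -> y \in R -> ~~ G x y.

Definition cooperative_coloring (V : finType) (k : nat) (G : 'I_k -> rel V)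
    (R : 'I_k -> {set V}) : Prop :=
  (forall i, independent (G i) (R i)) /\ (forall v : V, exists i, v \in R i).

Definition has_cooperative_coloring (V : finType) (k : nat) (G : 'I_k -> rel V) : Prop :=
  exists R, cooperative_coloring G R.

(* m is admissible for the class of star forests and degree bound d: every family
   of at least m star forests, each of maximum degree at most d, spanning a common
   vertex set, has a cooperative coloring.  m_S(d) is the least admissible m. *)
Definition star_admissible (d m : nat) : Prop :=
  forall (V : finType) (k : nat) (G : 'I_k -> rel V),
    m <= k ->
    (forall i, simple_graph (G i) /\ star_forest (G i) /\ max_deg_le (G i) d) ->
    has_cooperative_coloring G.

(* "m_S(d) >= x": every admissible m (in particular the least one) is >= x. *)
Definition mS_ge (d : nat) (x : R) : Prop :=
  forall m : nat, star_admissible d m -> (x <= INR m)%R.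

(* Main.v *)
Require Import Defs.
From mathcomp Require Import all_boot.
From Stdlib Require Import Reals.
From Stdlib Require Import Lra.
Set Implicit Arguments.
Unset Strict Implicit.
Unset Printing Implicit Defensive.

Section Comb.
Variable k : nat.

Fixpoint allseq (n : nat) : seq (seq 'I_k) :=
  match n with
  | 0 => [:: [::]]
  | n'.+1 => [::] :: [seq i :: s | i <- enum 'I_k, s <- allseq n']
  end.

Lemma mem_allseq n s : size s <= n -> s \in allseq n.
Proof.
elim: n s => [|n IH] [|i s] //=.
move=> Hs; rewrite in_cons /=.
apply: (allpairs_f (fun i s => i :: s)); first by rewrite mem_enum.
exact: IH.
Qed.

Definition L := [seq s <- allseq k | uniq s].

Lemma uniq_size (s : seq 'I_k) : uniq s -> size s <= k.
Proof. move/card_uniqP=> <-; have := max_card (mem s); by rewrite card_ord. Qed.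

Lemma memL s : (s \in L) = uniq s.
Proof.
rewrite mem_filter; case U: (uniq s) => //=.
exact/mem_allseq/uniq_size.
Qed.

Definition V := seq_sub L.

Lemma uniqV (u : V) : uniq (ssval u).
Proof. by rewrite -memL; exact: ssvalP. Qed.

Definition root : V := @SeqSub _ L [::] (eq_ind_r is_true (erefl true) (memL [::])).

Definition toV (s : seq 'I_k) : V := insubd root s.

Lemma toVK s : uniq s -> ssval (toV s) = s.
Proof. by move=> U; rewrite /toV insubdK // memL. Qed.

Definition P (i : 'I_k) (a b : seq 'I_k) := take (size a).+1 b == rcons a i.

Lemma PE i a b : P i a b <-> exists r, b = a ++ i :: r.
Proof.
rewrite /P; split.
  move/eqP=> H; exists (drop (size a).+1 b).
  by rewrite -cat_rcons -H cat_take_drop.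
case=> r ->; rewrite -cat_rcons take_size_cat //; by rewrite size_rcons.
Qed.

Definition Gr (i : 'I_k) : rel V := fun x y => P i (ssval x) (ssval y) || P i (ssval y) (ssval x).

Lemma split_uniq (i : 'I_k) a r : uniq (a ++ i :: r) -> [/\ i \notin a, i \notin r & uniq r].
Proof.
rewrite cat_uniq /= => /and3P [_ H /andP [H1 H2]].
split => //; by move: H; rewrite negb_or => /andP [].
Qed.

Definition cen (i : 'I_k) (a : seq 'I_k) := if i \in a then take (index i a) a else a.

Lemma cen_split i a r : i \notin a -> cen i (a ++ i :: r) = a /\ cen i a = a.
Proof.
move=> Ha; rewrite /cen (negbTE Ha) mem_cat inE eqxx orbT index_cat (negbTE Ha) /=.
by rewrite eqxx addn0 take_size_cat.
Qed.

Lemma Gr_edge i (x y : V) : Gr i x y ->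
  cen i (ssval x) = cen i (ssval y) /\ ((ssval x == cen i (ssval x)) || (ssval y == cen i (ssval y))).
Proof.
have Hx := uniqV x; have Hy := uniqV y.
case/orP => /PE [r E].
  rewrite E in Hy; case: (split_uniq Hy) => Hi _ _.
  rewrite E; case: (cen_split r Hi) => -> ->; by rewrite eqxx.
rewrite E in Hx; case: (split_uniq Hx) => Hi _ _.
rewrite E; case: (cen_split r Hi) => -> ->; by rewrite eqxx orbT.
Qed.

Lemma cen_uniq i a : uniq a -> uniq (cen i a).
Proof. rewrite /cen; case: ifP => // _; exact: take_uniq. Qed.

Lemma star i : star_forest (Gr i).
Proof.
move=> x; exists (toV (cen i (ssval x))) => u v /connectP [p Hp ->] Huv.
have Hc : cen i (ssval x) = cen i (ssval (last x p)).
  elim: p x Hp {Huv} => [|z p IH] x //= /andP [Hxz Hp].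
  rewrite -IH //; by case: (Gr_edge Hxz).
case: (Gr_edge Huv) => E /orP [] /eqP H; apply/orP; [left|right];
  apply/eqP/val_inj => /=; rewrite toVK ?cen_uniq ?uniqV //.
  by rewrite Hc.
by rewrite Hc E.
Qed.

Lemma simple i : simple_graph (Gr i).
Proof.
split.
  move=> x; rewrite /Gr orbb /P take_oversize //.
  apply/negP=> /eqP H; have := congr1 size H; rewrite size_rcons => /eqP.
  by rewrite -[X in X == _]addn0 -addn1 eqn_add2l.
by move=> x y; rewrite /Gr orbC.
Qed.

Lemma nth_inj (a : 'I_k) (s1 s2 : seq 'I_k) : a \notin s1 -> a \notin s2 ->
  size s1 <= k -> size s2 <= k -> (forall j : 'I_k, nth a s1 j = nth a s2 j) -> s1 = s2.
Proof.
move=> H1 H2 S1 S2 E.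
have Hsz : forall t1 t2 : seq 'I_k, a \notin t2 -> size t2 <= k ->
    (forall j : 'I_k, nth a t1 j = nth a t2 j) -> ~ (size t1 < size t2).
  move=> t1 t2 Ht2 St2 Et Hlt.
  have Hj : size t1 < k by apply: leq_trans Hlt St2.
  have := Et (Ordinal Hj); rewrite /= nth_default // => Ea.
  move: Ht2; rewrite Ea mem_nth //.
have Es : size s1 = size s2.
  case: (ltngtP (size s1) (size s2)) => // H.
  - by case: (Hsz s1 s2).
  - by case: (Hsz s2 s1) => // j; rewrite E.
apply: (eq_from_nth (x0 := a) Es) => j Hj.
have Hjk : j < k by apply: leq_trans Hj S1.
exact: (E (Ordinal Hjk)).
Qed.

Lemma deg i (x : V) : #|[set y | Gr i x y]| <= expn k k.
Proof.
have Hx := uniqV x.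
case Hi: (i \in ssval x).
  apply: (@leq_trans 1).
    rewrite -(cards1 (toV (cen i (ssval x)))); apply: subset_leq_card.
    apply/subsetP => y; rewrite !inE => /orP [] /PE [r E].
      have Hy := uniqV y; rewrite E in Hy; case: (split_uniq Hy) => Hn _ _.
      by rewrite Hi in Hn.
    apply/eqP/val_inj => /=; rewrite toVK ?cen_uniq //.
    rewrite E in Hx *; case: (split_uniq Hx) => Hn _ _.
    by case: (cen_split r Hn).
  by rewrite expn_gt0; case: k => //.
pose f (y : V) : {ffun 'I_k -> 'I_k} := [ffun j : 'I_k => nth i (drop (size (ssval x)).+1 (ssval y)) (nat_of_ord j)].
have Hf : {in [set y | Gr i x y] &, injective f}.
  move=> y1 y2; rewrite !inE => G1 G2 Ef.
  have get : forall y, Gr i x y -> exists r, ssval y = ssval x ++ i :: r.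
    move=> y /orP [] /PE // [r E].
    have Hx' := Hx; rewrite E in Hx'; case: (split_uniq Hx') => Hn _ _.
    by rewrite E mem_cat inE eqxx orbT in Hi.
  case: (get _ G1) => r1 E1; case: (get _ G2) => r2 E2.
  have D : forall (y : V) (r : seq 'I_k), (ssval y = ssval x ++ i :: r) -> drop (size (ssval x)).+1 (ssval y) = r.
    by move=> y r Ey; rewrite Ey -cat_rcons drop_size_cat // size_rcons.
  have U1 := uniqV y1; have U2 := uniqV y2.
  rewrite E1 in U1; rewrite E2 in U2.
  case: (split_uniq U1) => _ N1 _; case: (split_uniq U2) => _ N2 _.
  have Sz : forall (r : seq 'I_k) (y : V), (ssval y = ssval x ++ i :: r) -> size r <= k.
    move=> r y E; apply: leq_trans (uniq_size (uniqV y)).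
    by rewrite E size_cat /= -addSnnS leq_addl.
  have Er : r1 = r2.
    apply: (nth_inj N1 N2 (Sz _ _ E1) (Sz _ _ E2)) => j.
    have := congr1 (fun g : {ffun 'I_k -> 'I_k} => g j) Ef; rewrite /f !ffunE (D _ _ E1) (D _ _ E2) //.
  by apply: val_inj; rewrite /= E1 E2 Er.
rewrite -(card_in_imset Hf); apply: leq_trans (max_card _) _.
by rewrite card_ffun card_ord.
Qed.

Lemma no_coloring (R : 'I_k -> {set V}) : ~ cooperative_coloring Gr R.
Proof.
case=> Hind Hcov.
suff: forall n (u : V), k - size (ssval u) <= n ->
   (forall p i, take p.+1 (ssval u) = rcons (take p (ssval u)) i -> toV (take p (ssval u)) \in R i) -> False.
  move=> H; apply: (H k root); first by rewrite /= subn0.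
  by move=> p i /= E.
have inu : forall (u : V) i, u \in R i ->
   (forall p i, take p.+1 (ssval u) = rcons (take p (ssval u)) i -> toV (take p (ssval u)) \in R i) ->
   i \notin ssval u.
  move=> u i Hu Hanc; apply/negP => Hi.
  have U := uniqV u.
  pose p := index i (ssval u).
  have Hp : p < size (ssval u) by rewrite index_mem.
  have Et : take p.+1 (ssval u) = rcons (take p (ssval u)) i.
    by rewrite (take_nth i Hp) nth_index.
  have Hw := Hanc p i Et.
  have : Gr i (toV (take p (ssval u))) u.
    apply/orP; left; rewrite /P toVK ?take_uniq // size_take Hp; exact/eqP.
  by apply/negP; apply: Hind.
have ext : forall (u : V) i, u \in R i -> i \notin ssval u ->
   (forall p i, take p.+1 (ssval u) = rcons (take p (ssval u)) i -> toV (take p (ssval u)) \in R i) ->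
   (forall p j, take p.+1 (rcons (ssval u) i) = rcons (take p (rcons (ssval u) i)) j ->
      toV (take p (rcons (ssval u) i)) \in R j).
  move=> u i Hu Hi Hanc p j.
  case: (ltngtP p (size (ssval u))) => Hp.
  - rewrite -!cats1 (takel_cat _ Hp) (takel_cat _ (ltnW Hp)); move=> E; apply: Hanc; by rewrite E cats1.
  - have Hp1 : size (ssval u) < p.+1 by apply: leqW. rewrite !take_oversize ?size_rcons // => /(congr1 size); rewrite size_rcons.
    rewrite !size_rcons => -[] H; exfalso; exact: (n_Sn _ H).
  - rewrite Hp take_oversize ?size_rcons // -cats1 take_size_cat // cats1.
    move=> E; have Eij : i = j by have := congr1 snd (rcons_inj E).
    rewrite -Eij; suff -> : toV (ssval u) = u by [].
    by apply: val_inj; rewrite /= toVK // uniqV.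
elim=> [|n IH] u Hn Hanc; case: (Hcov u) => i Hu; have U := uniqV u;
  have Hi := inu u i Hu Hanc.
- have : uniq (rcons (ssval u) i) by rewrite rcons_uniq Hi.
  move/uniq_size; rewrite size_rcons => Hs.
  move: Hn; rewrite leqn0 subn_eq0 leqNgt; by rewrite Hs.
- have Us : uniq (rcons (ssval u) i) by rewrite rcons_uniq Hi.
  apply: (IH (toV (rcons (ssval u) i))).
    rewrite toVK // size_rcons subnS; move: Hn.
    case: (k - size (ssval u)) => //.
  rewrite toVK //; exact: ext.
Qed.
End Comb.
Lemma INR_expn (m n : nat) : INR (expn m n) = (INR m ^ n)%R.
Proof.
elim: n => [|n IH]; first by rewrite expn0.
by rewrite expnS mulnE mult_INR IH.
Qed.

Lemma ln_le' (x y : R) : (0 < x)%R -> (x <= y)%R -> (ln x <= ln y)%R.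
Proof.
move=> Hx Hxy; case: (Rle_lt_or_eq_dec _ _ Hxy) => H.
  by apply: Rlt_le; apply: ln_increasing.
by rewrite H; apply: Rle_refl.
Qed.

Lemma real_bound (d m : nat) : (27 <= d)%N -> (d < expn m m)%N ->
  (ln (INR d) / ln (ln (INR d)) <= INR m)%R.
Proof.
move=> H27 Hdm.
have Hm2 : (2 <= m)%N.
  case: m Hdm => [|[|m]] //; rewrite ?expn0 ?expn1 => Hd; by move: (leq_trans H27 Hd).
have Hd27 : (27 <= INR d)%R.
  have := le_INR 27 d ((elimT leP H27)); rewrite /= ; move=> H; apply: Rle_trans H.
  right; simpl; lra.
have Hm : (2 <= INR m)%R by have := le_INR 2 m ((elimT leP Hm2)); simpl; lra.
have He3 : (exp 3 <= 27)%R.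
  have -> : (3 = 1 + 1 + 1)%R by lra.
  rewrite !exp_plus.
  have H1 := exp_le_3; have H0 : (0 < exp 1)%R by apply: exp_pos.
  have : (exp 1 * exp 1 <= 3 * 3)%R by apply: Rmult_le_compat; lra.
  move=> H2; have : (exp 1 * exp 1 * exp 1 <= 3 * 3 * 3)%R.
    apply: Rmult_le_compat => //; try lra.
    apply: Rmult_le_pos; lra.
  lra.
have Hdpos : (0 < INR d)%R by lra.
set t := ln (INR d).
have Ht3 : (3 <= t)%R.
  rewrite -(ln_exp 3); apply: ln_le'; [apply: exp_pos | lra].
have Hlt1 : (1 <= ln t)%R.
  rewrite -(ln_exp 1); apply: ln_le'; [apply: exp_pos | have := exp_le_3; lra].
have Htm : (t < INR m * ln (INR m))%R.
  rewrite -ln_pow; last lra.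
  apply: ln_increasing => //; rewrite -INR_expn; apply: lt_INR; exact/ltP.
have Hlnm : (0 < ln (INR m))%R.
  rewrite -ln_1; apply: ln_increasing; lra.
case: (Rle_or_lt t (INR m)) => Hc.
  apply: Rle_trans Hc.
  rewrite /Rdiv; apply: (Rmult_le_reg_r (ln t)); first lra.
  rewrite Rmult_assoc Rinv_l; last lra.
  rewrite Rmult_1_r; have : (0 <= t * (ln t - 1))%R by apply: Rmult_le_pos; lra.
  nra.
have Hlnt : (ln (INR m) < ln t)%R by apply: ln_increasing; lra.
apply: Rlt_le; rewrite /Rdiv; apply: (Rmult_lt_reg_r (ln t)); first lra.
rewrite Rmult_assoc Rinv_l; last lra.
rewrite Rmult_1_r. nra.
Qed.

Lemma not_adm m d : (expn m m <= d)%N -> ~ star_admissible d m.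
Proof.
move=> Hd H.
case: (H (V m) m (@Gr m) (leqnn m)).
  move=> i; split; first exact: simple.
  split; first exact: star.
  move=> x; exact: leq_trans (deg i x) Hd.
move=> R; exact: no_coloring.
Qed.

Theorem theorem1 :
  exists eps : nat -> R, Un_cv eps 0%R /\
    forall d : nat,
      mS_ge d ((1 + eps d) * (ln (INR d) / ln (ln (INR d))))%R.
Proof.
exists (fun d => if (27 <= d)%N then 0%R else (-1)%R); split.
  move=> e He; exists 27%N => n /leP Hn.
  by rewrite Hn /R_dist Rminus_0_r Rabs_R0.
move=> d m Hadm; case: ifP => H.
  rewrite Rplus_0_r Rmult_1_l; apply: real_bound => //.
  rewrite ltnNge; apply/negP => Hle; exact: (not_adm Hle Hadm).
replace (1 + -1)%R with 0%R by ring; rewrite Rmult_0_l; apply: pos_INR.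
Qed.
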